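(* Fix a prime power $q$ and $u\ge1$. Let $(C_i)_{i\ge1}$ be a family of linear $[n_i,k_i,d_i]$ codes over $\mathbb{F}_{q^u}$ with $n_i\to\infty$, $(k_i)$ nondecreasing, $\liminf_{i\to\infty}k_i/n_i\ge\alpha$ and $\liminf_{i\to\infty}d_i/n_i\ge\beta$ for some constants $0<\alpha,\beta<1$, and suppose there is a constant $W$ with $n_i\le Wn_{i-1}$ for all $i\ge2$. Then for every constant $c>0$ there are constants $R_1,A,B>0$ and $p_0\in(0,1)$ (depending only on $q,u$, the family, and $c$) such that the following holds. For every $n\ge2$ and every $[n,k]$ linear code $C\subseteq\mathbb{F}_q^n$ with $k<n$ and parity-check matrix $H\in\mathbb{F}_q^{(n-k)\times n}$ of rank $n-k$, there is an index $i$ with $k_i\ge n-k$ and $n_i\le A n$ such that, letting $\bar G'_i$ be the $(n-k)\times n_i$ matrix formed by any $n-k$ rows of a generator matrix of $C_i$, the list $S$ of rows of $\bar G_i'^{\,T}H$ is a test set for $C$ with designed probability $p_0$, and Algorithm DetermineCodeword run with this $S$ and $R=\lceil R_1\log n\rceil$ rounds: performs at most $B\,u\,n\log n$ operations in $\mathbb{F}_q$; uses storage of at most $B\,u\,n^2$ elements of $\mathbb{F}_q$ for $S$; always returns True when $\mathbf{x}\in C$; and returns True with probability at most $n^{-c}$ when $\mathbf{x}\notin C$.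
   Context: $\mathbb{F}_{q^u}$ is the degree-$u$ extension of $\mathbb{F}_q$, whose elements are represented as vectors of length $u$ over $\mathbb{F}_q$; $(\mathbf{x},\mathbf{y})=\sum_{j=1}^n x_jy_j$. A test set with designed probability $p\in(0,1)$ for $C$ is a finite nonempty collection $S$ of vectors in $\mathbb{F}_{q^u}^n$ (counted with multiplicity) such that for every $\mathbf{x}\in\mathbb{F}_q^n$: (1) $\mathbf{x}\in C$ iff $(\mathbf{x},\mathbf{y})=0$ for all $\mathbf{y}\in S$; (2) if some $\mathbf{y}\in S$ has $(\mathbf{x},\mathbf{y})\ne0$, then $\#\{\mathbf{y}\in S:(\mathbf{x},\mathbf{y})\ne0\}\ge(1-p)\#S$. Algorithm DetermineCodeword (with $R$ rounds, test set $S$ precomputed) on input $\mathbf{x}\in\mathbb{F}_q^n$: for $i=1,\dots,R$, choose $\mathbf{y}\in S$ uniformly at random, independently of previous rounds, and compute $z=(\mathbf{x},\mathbf{y})$; if $z\ne0$, return False. If all rounds give $z=0$, return True. *)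

(* Defs.v *)
From HB Require Import structures.
From mathcomp Require Import all_boot all_order all_algebra.
From mathcomp Require Import boolp classical_sets reals constructive_ereal ereal.
From mathcomp Require Import topology normedtype sequences exp.
Set Implicit Arguments. Unset Strict Implicit. Unset Printing Implicit Defensive.
Import Order.TTheory GRing.Theory Num.Theory.
Local Open Scope ring_scope.

Definition wt (K : nzRingType) (m : nat) (v : 'rV[K]_m) : nat :=
  #|[set j : 'I_m | v 0 j != 0]|.

Definition is_min_distance (K : fieldType) (k m : nat) (G : 'M[K]_(k, m)) (d : nat) : Prop :=
  (exists c : 'rV[K]_m, [/\ (c <= G)%MS, c != 0 & wt c = d]) /\
  (forall c : 'rV[K]_m, (c <= G)%MS -> c != 0 -> (d <= wt c)%N).

Section TestSets.
Variables (F L : finFieldType) (emb : {rmorphism F -> L}).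

Definition dotFL (m : nat) (x : 'rV[F]_m) (y : 'rV[L]_m) : L :=
  \sum_(j < m) emb (x 0 j) * y 0 j.

(* Test set for the code C (row space of C) with designed probability p;
   S is a list, i.e. counted with multiplicity. *)
Definition is_test_set (R : realType) (k m : nat) (C : 'M[F]_(k, m))
    (S : seq 'rV[L]_m) (p : R) : Prop :=
  (0 < size S)%N /\
  forall x : 'rV[F]_m,
    ((x <= C)%MS <-> all (fun y => dotFL x y == 0) S) /\
    (has (fun y => dotFL x y != 0) S ->
       (1 - p) * (size S)%:R <= (count (fun y => dotFL x y != 0) S)%:R).

(* Algorithm DetermineCodeword, run on the sequence ys of vectors drawn in
   the successive rounds. *)
Fixpoint dc_run (m : nat) (x : 'rV[F]_m) (ys : seq 'rV[L]_m) : bool :=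
  match ys with
  | [::] => true
  | y :: ys' => if dotFL x y != 0 then false else dc_run x ys'
  end.

(* Cost model: an element of F_{q^u} is a vector of u elements of F_q.
   Computing (x,y) for x in F_q^m, y in F_{q^u}^m takes u*m multiplications
   in F_q, u*(m-1) additions, and the test z != 0 takes u comparisons. *)
Definition round_cost (u m : nat) : nat := (u * m + u * (m - 1) + u)%N.

Fixpoint dc_cost (u m : nat) (x : 'rV[F]_m) (ys : seq 'rV[L]_m) : nat :=
  match ys with
  | [::] => 0%N
  | y :: ys' => addn (round_cost u m) (if dotFL x y != 0 then 0%N else dc_cost u x ys')
  end.

Definition chosen (m : nat) (S : seq 'rV[L]_m) (Rn : nat)
    (ch : {ffun 'I_Rn -> 'I_(size S)}) : seq 'rV[L]_m :=
  [seq nth 0 S (ch r) | r <- enum 'I_Rn].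

(* Probability that DetermineCodeword returns True: the Rn indices are
   independent and uniform in 'I_(size S). *)
Definition prob_true (R : realType) (m : nat) (S : seq 'rV[L]_m) (Rn : nat)
    (x : 'rV[F]_m) : R :=
  (#|[set ch : {ffun 'I_Rn -> 'I_(size S)} | dc_run x (chosen ch)]|)%:R
    / ((size S) ^ Rn)%:R.

(* Storage of S, in elements of F_q (each entry of F_{q^u} is u elements). *)
Definition storage (u m : nat) (S : seq 'rV[L]_m) : nat := (size S * m * u)%N.

Definition rows_of (r m : nat) (M : 'M[L]_(r, m)) : seq 'rV[L]_m :=
  [seq row j M | j <- enum 'I_r].

Definition S_of (r ni m : nat) (Gsel : 'M[L]_(r, ni)) (H : 'M[F]_(r, m)) :
    seq 'rV[L]_m :=
  rows_of (Gsel^T *m map_mx emb H).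

End TestSets.

(* Main.v *)
Require Import Defs.
From HB Require Import structures.
From mathcomp Require Import all_boot all_order all_algebra.
From mathcomp Require Import boolp classical_sets reals constructive_ereal ereal.
From mathcomp Require Import topology normedtype sequences exp.
From mathcomp Require Import ring lra zify.
Import Order.TTheory GRing.Theory Num.Theory.
Local Open Scope ring_scope.

Lemma liminf_ev (R : realType) (v : nat -> R) (a b : R) :
  (a%:E <= limn_einf (fun i => (v i)%:E))%E -> b < a ->
  exists N, forall i, (N <= i)%N -> b <= v i.
Proof.
move=> ha hb.
have : (b%:E < ereal_sup (range (einfs (fun i => (v i)%:E))))%E.
  have := @cvg_einfs_sup R (fun i => (v i)%:E).
  move/(cvg_lim _) => <- //; rewrite -limn_einf_lim.
  by apply: lt_le_trans ha; rewrite lte_fin.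
move=> /ereal_sup_gt[_ [N _ <-]] hN; exists N => i Ni.
rewrite -lee_fin; apply: (ltW (lt_le_trans hN _)).
by apply: ereal_inf_lbound; exists i.
Qed.

Lemma count_card (T : Type) (x0 : T) (p : pred T) (s : seq T) :
  count p s = #|[set j : 'I_(size s) | p (nth x0 s j)]|.
Proof.
rewrite -sum1_count -[in LHS](mkseq_nth x0 s) /mkseq big_map.
have -> : iota 0 (size s) = index_iota 0 (size s) by rewrite /index_iota subn0.
rewrite big_mkord -sum1_card; apply: eq_bigl => j; by rewrite inE.
Qed.

Section S.
Variables (F L : finFieldType) (emb : {rmorphism F -> L}).

Lemma dc_run_all m (x : 'rV[F]_m) ys : dc_run emb x ys = all (fun y => dotFL emb x y == 0) ys.
Proof. by elim: ys => //= y ys ->; case: eqP. Qed.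

Lemma dc_cost_le u m (x : 'rV[F]_m) ys : (dc_cost emb u x ys <= size ys * round_cost u m)%N.
Proof.
elim: ys => //= y ys IH; rewrite mulSn leq_add2l; case: ifP => // _.
Qed.

Lemma dotFL_mx m (x : 'rV[F]_m) y : dotFL emb x y = (map_mx emb x *m y^T) 0 0.
Proof. by rewrite /dotFL !mxE; apply: eq_bigr => j _; rewrite !mxE. Qed.

Lemma prob_bound (R : realType) m (S : seq 'rV[L]_m) Rn x (p0 : R) :
  (0 < size S)%N -> 0 <= p0 ->
  (count (fun y => dotFL emb x y == 0) S)%:R <= p0 * (size S)%:R ->
  prob_true emb R S Rn x <= p0 ^+ Rn.
Proof.
move=> s0 p00 hc.
set Z := [set j : 'I_(size S) | dotFL emb x (nth 0 S j) == 0].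
have hZ : #|Z| = count (fun y => dotFL emb x y == 0) S by rewrite (count_card _ (0 : 'rV[L]_m)).
have hcard : #|[set ch : {ffun 'I_Rn -> 'I_(size S)} | dc_run emb x (chosen ch)]|
             = (#|Z| ^ Rn)%N.
  rewrite -[in RHS](card_ord Rn) -card_ffun_on; apply: eq_card => ch.
  rewrite inE dc_run_all /chosen all_map; apply/allP/ffun_onP => h r.
    by have := h r (mem_enum _ r); rewrite /= inE.
  by move=> _ /=; have := h r; rewrite inE.
rewrite /prob_true hcard hZ !natrX -expr_div_n.
have sp : (0 : R) < (size S)%:R by rewrite ltr0n.
apply: lerXn2r; first by rewrite qualifE /= divr_ge0 ?ler0n.
  by rewrite qualifE.
by rewrite ler_pdivrMr.
Qed.

Lemma row_free_rowsub (p q m : nat) (f : 'I_p -> 'I_q) (G : 'M[L]_(q, m)) :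
  injective f -> row_free G -> row_free (rowsub f G).
Proof.
move=> injf frG; apply: inj_row_free => v.
rewrite rowsubE mulmxA => /eqP; rewrite mulmx_free_eq0 // => /eqP h.
apply/rowP => a; have := congr1 (fun M : 'rV[L]_q => M 0 (f a)) h.
rewrite !mxE (bigD1 a) //= big1 ?addr0 => [|b nba].
  by rewrite !mxE eqxx mulr1.
by rewrite !mxE (inj_eq injf) (negbTE nba) mulr0.
Qed.
Lemma key (r m n ki d : nat) (G' : 'M[L]_(r,m)) (Gi : 'M[L]_(ki, m))
  (H : 'M[F]_(r,n)) (x : 'rV[F]_n) :
  row_free G' -> (G' <= Gi)%MS -> is_min_distance Gi d ->
  (all (fun y => dotFL emb x y == 0) (S_of emb G' H) = (H *m x^T == 0)) /\
  (H *m x^T != 0 -> (d <= count (fun y => dotFL emb x y != 0%R) (S_of emb G' H))%N).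
Proof.
move=> fr sub [_ hd].
set w := (map_mx emb (H *m x^T))^T.
set v := w *m G'.
have hdot : forall j, dotFL emb x (row j (G'^T *m map_mx emb H)) = v 0 j.
  move=> j; rewrite /dotFL /v /w !mxE.
  under eq_bigr => l _ do rewrite !mxE big_distrr /=.
  rewrite exchange_big /=; apply: eq_bigr => a _.
  rewrite ?mxE rmorph_sum big_distrl /=; apply: eq_bigr => l _.
  rewrite !mxE rmorphM /=; ring.
have hv : (v == 0) = (H *m x^T == 0).
  by rewrite /v mulmx_free_eq0 // /w trmx_eq0 map_mx_eq0.
have vE : v = w *m G' by [].
clearbody v.
split.
  rewrite /S_of /rows_of all_map -hv; apply/allP/eqP => [h|v0].
    apply/rowP => j; have := h j (mem_enum _ j).
    rewrite /= hdot mxE => /eqP. by [].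
  by move=> j _ /=; rewrite hdot v0 mxE.
move=> hx.
have -> : count (fun y => dotFL emb x y != 0%R) (S_of emb G' H) = wt v.
  rewrite /S_of /rows_of count_map /wt -sum1_count big_enum_cond -sum1_card.
  by apply: eq_bigl => j; rewrite !inE /= hdot.
apply: hd; first by rewrite vE; apply: submx_trans sub; apply: submxMl.
by rewrite hv.
Qed.
End S.

Theorem theorem1 (R : realType) (F L : finFieldType) (emb : {rmorphism F -> L})
  (u : nat) (hu : (1 <= u)%N) (hL : #|L| = (#|F| ^ u)%N)
  (nf kf df : nat -> nat) (Gf : forall i, 'M[L]_(kf i, nf i))
  (alpha beta W : R)
  (hfree : forall i, row_free (Gf i))
  (hdist : forall i, is_min_distance (Gf i) (df i))
  (hninf : forall M : nat, exists N : nat, forall i, (N <= i)%N -> (M <= nf i)%N)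
  (hkmono : forall i, (kf i <= kf i.+1)%N)
  (halpha : 0 < alpha < 1) (hbeta : 0 < beta < 1)
  (hrate : (alpha%:E <= limn_einf (fun i => ((kf i)%:R / (nf i)%:R : R)%:E))%E)
  (hrdist : (beta%:E <= limn_einf (fun i => ((df i)%:R / (nf i)%:R : R)%:E))%E)
  (hW : forall i, (nf i.+1)%:R <= W * (nf i)%:R) :
  forall c : R, 0 < c ->
  exists R1 A B p0 : R,
    [/\ 0 < R1, 0 < A, 0 < B, 0 < p0 < 1 &
    forall (n k : nat) (C : 'M[F]_(k, n)) (H : 'M[F]_(n - k, n)),
      (2 <= n)%N -> (k < n)%N -> \rank C = k -> \rank H = (n - k)%N ->
      (forall x : 'rV[F]_n, (x <= C)%MS <-> H *m x^T == 0) ->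
      exists i : nat,
        [/\ (n - k <= kf i)%N, (nf i)%:R <= A * n%:R &
        forall (G : 'M[L]_(kf i, nf i)) (f : 'I_(n - k) -> 'I_(kf i)),
          row_free G -> (G == Gf i)%MS -> injective f ->
          let S := S_of emb (rowsub f G) H in
          let Rn := absz (Num.ceil (R1 * ln n%:R)) in
          [/\ is_test_set emb C S p0,
              (forall (x : 'rV[F]_n) (ch : {ffun 'I_Rn -> 'I_(size S)}),
                 (dc_cost emb u x (chosen ch))%:R <= B * u%:R * n%:R * ln n%:R),
              (storage u S)%:R <= B * u%:R * n%:R ^+ 2,
              (forall x : 'rV[F]_n, (x <= C)%MS ->
                 forall ch : {ffun 'I_Rn -> 'I_(size S)}, dc_run emb x (chosen ch)) &
              (forall x : 'rV[F]_n, ~~ (x <= C)%MS ->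
                 prob_true emb R S Rn x <= n%:R `^ (- c))]]].
Proof.
move=> c c0.
have /andP[a0 a1] := halpha.
have /andP[b0 b1] := hbeta.
have [N1 hN1] := @liminf_ev R _ alpha (alpha / 2) hrate ltac:(lra).
have [N2 hN2] := @liminf_ev R _ beta (beta / 2) hrdist ltac:(lra).
have [N3 hN3] := hninf 1%N.
pose N0 := maxn N1 (maxn N2 N3).
have hnf : forall i, (N0 <= i)%N -> (0 < nf i)%N.
  move=> i hi; apply: hN3; apply: leq_trans hi; by rewrite /N0 !leq_max leqnn !orbT.
have hk : forall i, (N0 <= i)%N -> alpha / 2 * (nf i)%:R <= (kf i)%:R.
  move=> i hi; have np : (0:R) < (nf i)%:R by rewrite ltr0n hnf.
  rewrite -ler_pdivlMr //; apply: hN1; apply: leq_trans hi; by rewrite /N0 !leq_max leqnn.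
have hd : forall i, (N0 <= i)%N -> beta / 2 * (nf i)%:R <= (df i)%:R.
  move=> i hi; have np : (0:R) < (nf i)%:R by rewrite ltr0n hnf.
  rewrite -ler_pdivlMr //; apply: hN2; apply: leq_trans hi; by rewrite /N0 !leq_max leqnn !orbT.
pose p0 := 1 - beta / 2.
have p00 : 0 < p0 by rewrite /p0; lra.
have p01 : p0 < 1 by rewrite /p0; lra.
have lp : ln p0 < 0 by apply: ln_lt0; rewrite p00 p01.
pose R1 := c / - ln p0.
have R10 : 0 < R1 by rewrite /R1 divr_gt0 // oppr_gt0.
have l2 : 0 < ln (2:R) by apply: ln_gt0; lra.
have Wa : 0 <= 2 * `|W| / alpha by rewrite divr_ge0 ?mulr_ge0 ?normr_ge0 // ltW.
have nf0 : (0:R) <= (nf N0)%:R by rewrite ler0n.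
pose A := (nf N0)%:R + 2 * `|W| / alpha + 1.
have A0 : 0 < A by rewrite /A; lra.
have il2 : 0 < (ln (2:R))^-1 by rewrite invr_gt0.
pose B := A + 3 * (R1 + (ln (2:R))^-1).
have AB : A <= B by rewrite /B; lra.
have B0 : 0 < B by rewrite /B; lra.
exists R1, A, B, p0; split => //; first by rewrite p00 p01.
move=> n k C H n2 kn rC rH hC.
have n1 : (1 : R) <= n%:R by rewrite ler1n; apply: ltnW.
have hex : exists i, (N0 <= i)%N && (n <= kf i)%N.
  have [M hM] : exists M : nat, 2 * n%:R / alpha < M%:R.
    by eexists; apply: archi_boundP; rewrite divr_ge0 ?mulr_ge0 ?ler0n // ltW.
  have [N4 hN4] := hninf M.
  exists (maxn N0 N4); rewrite leq_maxl /=.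
  have hi1 : (N0 <= maxn N0 N4)%N by rewrite leq_maxl.
  have := hk _ hi1; have : (M <= nf (maxn N0 N4))%N by apply: hN4; rewrite leq_maxr.
  rewrite -(ler_nat R) => hMn hkk.
  rewrite -(ler_nat R); apply: ltW; apply: lt_le_trans hkk.
  have -> : (n%:R : R) = alpha / 2 * (2 * n%:R / alpha).
    by field; rewrite gt_eqF.
  rewrite ltr_pM2l; last by lra.
  exact: lt_le_trans hM hMn.
case: (ex_minnP hex) => i /andP[iN0 nki] imin.
have hA : (nf i)%:R <= A * n%:R.
  have [eq|lt] : N0 = i \/ (N0 < i)%N by move: iN0; rewrite leq_eqVlt => /orP[/eqP|]; [left|right].
    rewrite -eq; apply: (le_trans _ (ler_wpM2l (ltW A0) n1)); rewrite mulr1 /A; lra.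
  move: lt imin; case: i {iN0 nki} => [//|j] lt imin.
  have jN0 : (N0 <= j)%N by [].
  have nkj : (kf j < n)%N.
    rewrite ltnNge; apply/negP => h; have := imin j; rewrite jN0 h => /(_ isT).
    by rewrite ltnn.
  have h1 : (nf j)%:R <= 2 * n%:R / alpha.
    rewrite ler_pdivlMr //; have := hk j jN0; move: nkj; rewrite -(ltr_nat R); lra.
  have h2 : `|W| * (nf j)%:R <= 2 * `|W| / alpha * n%:R.
    have -> : 2 * `|W| / alpha * n%:R = `|W| * (2 * n%:R / alpha).
      by field; rewrite gt_eqF.
    by apply: ler_wpM2l => //; rewrite normr_ge0.
  have h3 : W * (nf j)%:R <= `|W| * (nf j)%:R by apply: ler_wpM2r; rewrite ?ler0n ?ler_norm.
  have h4 : (nf N0)%:R <= (nf N0)%:R * n%:R :> R by rewrite ler_peMr.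
  apply: (le_trans (hW j)); rewrite /A; lra.
exists i; split.
- by apply: leq_trans nki; apply: leq_subr.
- exact: hA.
move=> G f frG eqG injf S Rn.
have frG' : row_free (rowsub f G) := @row_free_rowsub L _ _ _ f G injf frG.
have subG' : (rowsub f G <= Gf i)%MS.
  by case/andP: eqG => sG _; apply: submx_trans sG; apply: rowsub_sub.
have hK := fun x => @key F L emb _ _ _ _ _ (rowsub f G) (Gf i) H x frG' subG' (hdist i).
have sS : size S = nf i by rewrite /S /S_of /rows_of size_map size_enum_ord.
have hdi := hd i iN0.
have npos := hnf i iN0.
have lnn : ln (2:R) <= ln n%:R.
  by rewrite ler_ln ?posrE ?ler_nat ?ltr0n //; apply: ltnW.
have y0 : 0 <= R1 * ln (n%:R : R) by rewrite mulr_ge0 ?ltW //; lra.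
have RnE : (Rn%:R : R) = (Num.ceil (R1 * ln (n%:R : R)))%:~R.
  by rewrite /Rn natr_absz ger0_norm // ceil_ge0; lra.
have hRn1 : R1 * ln n%:R <= Rn%:R by rewrite RnE ceil_ge.
have hRn2 : (Rn%:R : R) <= R1 * ln n%:R + 1.
  by have := ceilB1_lt (R1 * ln (n%:R : R)); rewrite RnE intrD; lra.
split.
- split; first by rewrite sS.
  move=> x; have [K1 K2] := hK x; split.
    by split => [/hC|h]; [rewrite K1 | apply/hC; rewrite -K1].
  move=> hh.
  have nz : H *m x^T != 0.
    apply/negP; rewrite -K1 => /allP al; case/hasP: hh => y yS.
    by rewrite (eqP (al y yS)) eqxx.
  have -> : 1 - p0 = beta / 2 by rewrite /p0; lra.
  rewrite sS; apply: le_trans hdi _; rewrite ler_nat; exact: K2 nz.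
- move=> x ch.
  have hc : (dc_cost emb u x (chosen ch) <= Rn * (3 * (u * n)))%N.
    apply: leq_trans (@dc_cost_le F L emb u n x (chosen ch)) _.
    rewrite /chosen size_map size_enum_ord leq_mul2l /round_cost; apply/orP; right.
    have e1 : (u * (n - 1) <= u * n)%N by rewrite leq_mul2l leq_subr orbT.
    have e2 : (u <= u * n)%N by rewrite leq_pmulr // ltnW.
    rewrite !mulSn mul0n addn0 addnA; apply: leq_add => //; exact: leq_add.
  apply: (@le_trans _ _ ((Rn * (3 * (u * n)))%:R : R)); first by rewrite ler_nat; exact: hc.
  have un0 : (0:R) <= u%:R * n%:R by rewrite mulr_ge0 ?ler0n.
  have h1 : 1 <= ln (n%:R : R) * (ln (2:R))^-1 by rewrite ler_pdivlMr // mul1r.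
  have h2 : (Rn%:R : R) <= (R1 + (ln (2:R))^-1) * ln n%:R.
    by apply: (le_trans hRn2); rewrite mulrDl lerD2l mulrC.
  have h3 : 0 <= ln (n%:R : R) by apply: le_trans (ltW l2) lnn.
  rewrite !natrM.
  apply: le_trans (_ : (R1 + (ln (2:R))^-1) * ln n%:R * (3%:R * (u%:R * n%:R)) <= _).
    by apply: ler_wpM2r => //; rewrite mulr_ge0 ?ler0n.
  have -> : (R1 + (ln (2:R))^-1) * ln n%:R * (3%:R * (u%:R * n%:R)) =
            (3 * (R1 + (ln (2:R))^-1)) * (u%:R * n%:R * ln n%:R) by ring.
  rewrite -[B * _ * _ * _]mulrA -[B * _ * _]mulrA [X in _ <= B * X]mulrA.
  apply: ler_wpM2r; first by rewrite mulr_ge0.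
  by rewrite /B lerDr ltW.
- rewrite /storage sS !natrM.
  have n0 : (0:R) <= n%:R by rewrite ler0n.
  apply: (@le_trans _ _ (A * n%:R * n%:R * u%:R)).
    by apply: ler_wpM2r; rewrite ?ler0n //; apply: ler_wpM2r.
  have -> : A * n%:R * n%:R * u%:R = A * (u%:R * n%:R ^+ 2) by ring.
  have -> : B * u%:R * n%:R ^+ 2 = B * (u%:R * n%:R ^+ 2) by ring.
  by apply: ler_wpM2r; rewrite // mulr_ge0 ?exprn_ge0 ?ler0n.
- move=> x xC ch; have [K1 _] := hK x.
  rewrite dc_run_all /chosen all_map; apply/allP => r _ /=.
  have := (hC x).1 xC; rewrite -K1 => /allP; apply.
  by apply: mem_nth; apply: ltn_ord.
- move=> x xnC; have [K1 K2] := hK x.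
  have nz : H *m x^T != 0 by apply: contra xnC => h; apply/hC.
  have cp := count_predC (fun y => dotFL emb x y == 0) S.
  have e : count (predC (fun y => dotFL emb x y == 0)) S =
           count (fun y => dotFL emb x y != 0) S by apply: eq_count.
  have hnz := K2 nz.
  rewrite e sS in cp.
  have cz : (count (fun y => dotFL emb x y == 0) S)%:R <= p0 * (size S)%:R.
    move: cp => /(congr1 (fun m => (m%:R : R))); rewrite natrD sS => cp.
    move: hnz; rewrite -(ler_nat R) => hnz.
    rewrite /p0; lra.
  have p0le : 0 <= p0 by apply: ltW.
  apply: le_trans (@prob_bound F L emb R n S Rn x p0 _ p0le cz) _.
    by rewrite sS.
  rewrite -powR_mulrn //.
  apply: le_trans (ger_powR _ hRn1) _; first by rewrite p00 ltW.
  rewrite /powR gt_eqF // gt_eqF ?ltr0n; last by apply: ltnW.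
  have lp0 : ln p0 != 0 by rewrite lt_eqF.
  rewrite /R1.
  have -> : c / - ln p0 * ln (n%:R : R) * ln p0 = - c * ln n%:R by field.
  by [].
Qed.
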